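(* Let $\Lambda$ be a strongly connected finite $k$-graph and let $M$ be the Borel probability measure on $\Lambda^\infty$ with $M(Z(\lambda))=\rho(\Lambda)^{-d(\lambda)}x^\Lambda_{s(\lambda)}$ for all $\lambda$. Suppose $g\in\mathbb{Z}^k\setminus\operatorname{Per}\Lambda$. Then there exist $a\in\mathbb{N}^k\setminus\{0\}$ and $0<K<1$ such that whenever $\mu,\nu\in\Lambda$ satisfy $s(\mu)=s(\nu)$ and $d(\mu)-d(\nu)=g$, we have for all $j\in\mathbb{N}$ \[M\Big(\bigcup_{\lambda\in s(\mu)\Lambda^{ja},\ \Lambda^{\min}(\mu\lambda,\nu\lambda)\neq\emptyset}Z(\mu\lambda)\Big)\le K^jM(Z(\mu)).\]
   Context: A $k$-graph is a countable category $\Lambda$ with a functor $d:\Lambda\to\mathbb{N}^k$ such that whenever $d(\lambda)=m+n$ there are unique $\mu,\nu$ with $d(\mu)=m$, $d(\nu)=n$, $\lambda=\mu\nu$. $\Lambda^n=d^{-1}(n)$, $\Lambda^0$ = vertices, $r,s$ range and source, $v\Lambda^n=\{\lambda\in\Lambda^n:r(\lambda)=v\}$. Standing convention: $\Lambda^{e_i}\neq\emptyset$ for each $i$. Finite: each $\Lambda^n$ finite; strongly connected: $v\Lambda w\neq\emptyset$ for all vertices. $\Lambda^{\min}(\mu,\nu)=\{(\alpha,\beta):\mu\alpha=\nu\beta,\ d(\mu\alpha)=d(\mu)\vee d(\nu)\}$. Coordinate matrices $A_i(v,w)=|v\Lambda^{e_i}w|$, $\rho(\Lambda)^n=\prod_i\rho(A_i)^{n_i}$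 (spectral radii). $x^\Lambda$ is the unique vector in $[0,\infty)^{\Lambda^0}$ with $\sum_vx^\Lambda_v=1$ and $A_ix^\Lambda=\rho(A_i)x^\Lambda$ for all $i$. Infinite paths: degree-preserving functors $x:\Omega_k\to\Lambda$, $\Omega_k=\{(m,n)\in\mathbb{N}^k\times\mathbb{N}^k:m\le n\}$ with $r(m,n)=(m,m)$, $s(m,n)=(n,n)$, $(m,n)(n,p)=(m,p)$, $d(m,n)=n-m$; $\Lambda^\infty$ their set, topologised by the compact open sets $Z(\lambda)=\{x:x(0,d(\lambda))=\lambda\}$; $\sigma^n(x)(p,q)=x(n+p,n+q)$. $\operatorname{Per}\Lambda=\{m-n:\sigma^m(x)=\sigma^n(x)\ \forall x\in\Lambda^\infty\}$. *)

(* Defs.v *)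
From HB Require Import structures.
From mathcomp Require Import all_boot all_order all_algebra.
From mathcomp Require Import finmap.
From mathcomp Require Import boolp classical_sets functions cardinality reals ereal.
From mathcomp Require Import topology sequences measure.
From mathcomp Require Import complex.

Set Implicit Arguments.
Unset Strict Implicit.
Unset Printing Implicit Defensive.

Import Order.TTheory GRing.Theory Num.Theory.
Local Open Scope classical_set_scope.
Local Open Scope ring_scope.

Definition vec (k : nat) := {ffun 'I_k -> nat}.
Definition zvec (k : nat) := {ffun 'I_k -> int}.

Definition vzero k : vec k := [ffun => 0%N].
Definition vadd k (m n : vec k) : vec k := [ffun i => (m i + n i)%N].
Definition vsubn k (n m : vec k) : vec k := [ffun i => (n i - m i)%N].
Definition vjoin k (m n : vec k) : vec k := [ffun i => maxn (m i) (n i)].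
Definition vscale k (j : nat) (a : vec k) : vec k := [ffun i => (j * a i)%N].
Definition vle k (m n : vec k) : bool := [forall i, (m i <= n i)%N].
Definition ve k (i : 'I_k) : vec k := [ffun l => (l == i : nat)].
Definition vsubz k (m n : vec k) : zvec k := [ffun i => (m i)%:Z - (n i)%:Z].

Lemma vle0 k (n : vec k) : vle (vzero k) n.
Proof. by apply/forallP => i; rewrite ffunE. Qed.

(* A k-graph is a countable category with a degree functor to N^k     *)
(* satisfying unique factorisation.  "Finite" means every Lambda^n is *)
(* finite; in particular the vertex set Lambda^0 is finite, so we take *)
(* the vertex type to be a finType.                                   *)
Record fin_kgraph (k : nat) := FinKGraph {
  vert : finType;
  mor : countType;
  kr : mor -> vert;
  ks : mor -> vert;
  kid : vert -> mor;
  kcomp : mor -> mor -> mor;         (* kcomp f g = f g, meaningful when ks f = kr g *)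
  kd : mor -> vec k;
  kr_id : forall v, kr (kid v) = v;
  ks_id : forall v, ks (kid v) = v;
  kr_comp : forall f g, ks f = kr g -> kr (kcomp f g) = kr f;
  ks_comp : forall f g, ks f = kr g -> ks (kcomp f g) = ks g;
  kid_l : forall f, kcomp (kid (kr f)) f = f;
  kid_r : forall f, kcomp f (kid (ks f)) = f;
  kcompA : forall f g h, ks f = kr g -> ks g = kr h ->
     kcomp (kcomp f g) h = kcomp f (kcomp g h);
  kd_id : forall v, kd (kid v) = vzero k;
  kd_comp : forall f g, ks f = kr g -> kd (kcomp f g) = vadd (kd f) (kd g);
  kfactor : forall (l : mor) (m n : vec k), kd l = vadd m n ->
     exists! p : mor * mor,
       [/\ ks p.1 = kr p.2, kd p.1 = m, kd p.2 = n & kcomp p.1 p.2 = l];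
  kfinite : forall n : vec k, finite_set [set l : mor | kd l = n];
  (* standing convention: Lambda^{e_i} is nonempty for each i *)
  knonempty : forall i : 'I_k, exists l : mor, kd l = ve i
}.

Arguments kr {k L} : rename.
Arguments ks {k L} : rename.
Arguments kid {k L} : rename.
Arguments kcomp {k L} : rename.
Arguments kd {k L} : rename.

Definition strongly_connected k (L : fin_kgraph k) : Prop :=
  forall v w : vert L, exists l : mor L, kr l = v /\ ks l = w.

Definition coordmx k (L : fin_kgraph k) (i : 'I_k) (v w : vert L) : nat :=
  #|` fset_set [set l : mor L | [/\ kr l = v, kd l = ve i & ks l = w]] |.

Definition specrad (R : realType) (V : finType) (A : V -> V -> nat) : R :=
  sup [set ComplexField.Normc.normc z | z in
        [set z : R[i] | root (char_poly
           (\matrix_(i < #|V|, j < #|V|) ((A (enum_val i) (enum_val j))%:R : R[i]))) z]].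

Arguments coordmx {k} L i v w.

Definition rhoL (R : realType) k (L : fin_kgraph k) (i : 'I_k) : R :=
  specrad R (coordmx L i).

Definition rho_pow (R : realType) k (L : fin_kgraph k) (n : vec k) : R :=
  \prod_(i < k) rhoL R L i ^+ n i.

Definition is_xLambda (R : realType) k (L : fin_kgraph k) (x : vert L -> R) : Prop :=
  [/\ forall v, 0 <= x v,
      \sum_(v : vert L) x v = 1 &
      forall i v, \sum_(w : vert L) (coordmx L i v w)%:R * x w = rhoL R L i * x v].

(* Infinite paths: degree-preserving functors Omega_k -> Lambda        *)
(* A morphism (m,n) of Omega_k (m <= n) is given with a proof of vle m n *)
(* (a boolean, so proofs are unique).                                  *)
Record ipath k (L : fin_kgraph k) := IPath {
  pf : forall m n : vec k, vle m n -> mor L;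
  pf_deg : forall m n (h : vle m n), kd (pf h) = vsubn n m;
  pf_r : forall m n (h : vle m n) (hm : vle m m), pf hm = kid (kr (pf h));
  pf_s : forall m n (h : vle m n) (hn : vle n n), pf hn = kid (ks (pf h));
  pf_comp : forall m n p (h1 : vle m n) (h2 : vle n p) (h3 : vle m p),
      ks (pf h1) = kr (pf h2) /\ kcomp (pf h1) (pf h2) = pf h3
}.

Arguments pf {k L} _ {m n}.

Definition cyl k (L : fin_kgraph k) (l : mor L) : set (ipath L) :=
  [set x | pf x (vle0 (kd l)) = l].

(* Per Lambda = { m - n | sigma^m x = sigma^n x for all x }, where      *)
(* sigma^n(x)(p,q) = x(n+p, n+q)                                        *)
Definition Per k (L : fin_kgraph k) : set (zvec k) :=
  [set g | exists m n : vec k, g = vsubz m n /\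
     forall (x : ipath L) (p q : vec k)
            (h1 : vle (vadd m p) (vadd m q)) (h2 : vle (vadd n p) (vadd n q)),
       pf x h1 = pf x h2].

Definition lmin_nonempty k (L : fin_kgraph k) (mu nu : mor L) : Prop :=
  exists al be : mor L,
    [/\ ks mu = kr al, ks nu = kr be, kcomp mu al = kcomp nu be &
        kd (kcomp mu al) = vjoin (kd mu) (kd nu)].

Definition bad_union k (L : fin_kgraph k) (mu nu : mor L) (j : nat) (a : vec k)
  : set (ipath L) :=
  [set x | exists l : mor L,
     [/\ kr l = ks mu, kd l = vscale j a,
         lmin_nonempty (kcomp mu l) (kcomp nu l) & cyl (kcomp mu l) x]].

(* Measures on the sigma-algebra generated by the cylinder sets         *)
(* (= the Borel sigma-algebra of Lambda^infty, since the Z(lambda) form *)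
(* a countable basis of the topology).                                 *)
Definition cylinders k (L : fin_kgraph k) : set (set (ipath L)) :=
  [set cyl l | l in [set: mor L]].

Arguments cylinders {k} L.

Definition is_measure_on (R : realType) (T : Type) (D : set (set T))
    (M : set T -> \bar R) : Prop :=
  [/\ M set0 = 0%E,
      forall A, D A -> (0 <= M A)%E &
      forall F : nat -> set T, (forall n, D (F n)) -> trivIset setT F ->
        D (\bigcup_n F n) ->
        (fun n => \sum_(i < n) M (F i))%E @ \oo --> M (\bigcup_n F n)].

Definition is_borel_prob (R : realType) k (L : fin_kgraph k)
    (M : set (ipath L) -> \bar R) : Prop :=
  is_measure_on <<s cylinders L >> M /\ M setT = 1%E.

(* Main.v *)
Require Import Defs.
From HB Require Import structures.
From mathcomp Require Import all_boot all_order all_algebra.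
From mathcomp Require Import finmap.
From mathcomp Require Import boolp classical_sets functions cardinality reals ereal.
From mathcomp Require Import topology sequences measure.
From mathcomp Require Import complex.
From mathcomp Require Import zify ring lra.
From Stdlib Require Import Classical.
Set Implicit Arguments.
Unset Strict Implicit.
Unset Printing Implicit Defensive.
Import Order.TTheory GRing.Theory Num.Theory.
Local Open Scope classical_set_scope.
Local Open Scope ring_scope.

Section Meas.
Variables (R : realType) (T : Type) (G : set (set T)) (M : set T -> \bar R).
Hypothesis HM : is_measure_on <<s G >> M.
Local Notation D := <<s G >>.

Lemma measU A B : D A -> D B -> D (A `|` B).
Proof.
move=> hA hB.
have -> : A `|` B = \bigcup_n (fun n => if n == 0%N then A else if n == 1%N then B else set0) n.
  apply/seteqP; split => [y [hy|hy]|y [n _]].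
  - by exists 0%N.
  - by exists 1%N.
  - by case: ifP => _; [left|case: ifP => _ //; right].
apply: sigma_algebra_bigcup => n; case: ifP => _ //; case: ifP => _ //.
exact: sigma_algebra0.
Qed.

Lemma measC A : D A -> D (~` A).
Proof. by move=> /sigma_algebraCD; rewrite setTD. Qed.

Lemma measD A B : D A -> D B -> D (A `\` B).
Proof.
move=> hA hB; rewrite setDE.
have -> : A `&` ~` B = ~` (~` A `|` B).
  by rewrite setCU setCK.
by apply: measC; apply: measU => //; apply: measC.
Qed.

Lemma meas_add2 A B : D A -> D B -> A `&` B = set0 -> M (A `|` B) = (M A + M B)%E.
Proof.
move=> hA hB hAB.
case: HM => M0 Mge0 Madd.
pose F := fun n => match n with 0%N => A | 1%N => B | _ => set0 end.
have FU : \bigcup_n F n = A `|` B.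
  apply/seteqP; split => [y [[|[|n]] _ /= hy]|y [hy|hy]].
  - by left.
  - by right.
  - by [].
  - by exists 0%N.
  - by exists 1%N.
have hF : forall n, D (F n).
  by move=> [|[|n]] //=; exact: sigma_algebra0.
have tF : trivIset setT F.
  move=> [|[|i]] [|[|j]] _ _ //= [y [hi hj]] //.
  - have h : (A `&` B) y by split.
    by rewrite hAB in h.
  - have h : (A `&` B) y by split.
    by rewrite hAB in h.
have := Madd F hF tF; rewrite FU => /(_ (measU hA hB)) hc.
apply/esym; rewrite -(cvg_lim _ hc) //.
apply/esym/lim_near_cst => //.
near=> n.
have : (2 <= n)%N by near: n; exact: nbhs_infty_ge.
move=> n2; have -> : n = (n - 2).+2 by lia.
by rewrite !big_ord_recl /= big1 ?adde0 // => i _.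
Unshelve. all: by end_near.
Qed.

Definition UnS (I : eqType) (s : seq I) (F : I -> set T) : set T :=
  [set y | exists2 i, i \in s & F i y].

Lemma UnS_cons (I : eqType) (a : I) s F : UnS (a :: s) F = F a `|` UnS s F.
Proof.
apply/seteqP; split => y.
- move=> [] i; rewrite inE; move=> /orP [/eqP -> |hi] hy; [by left|by right; exists i].
- move=> [hy|[i hi hy]]; first by exists a; rewrite ?inE ?eqxx.
  by exists i; rewrite ?inE ?hi ?orbT.
Qed.

Lemma UnS_nil (I : eqType) F : UnS (@nil I) F = set0.
Proof. by apply/seteqP; split => y // [] ii. Qed.

Lemma meas_UnS (I : eqType) (s : seq I) F : (forall i, i \in s -> D (F i)) -> D (UnS s F).
Proof.
elim: s => [|a s IH] h; first by rewrite UnS_nil; exact: sigma_algebra0.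
rewrite UnS_cons; apply: measU; first by apply: h; rewrite inE eqxx.
by apply: IH => i hi; apply: h; rewrite inE hi orbT.
Qed.

Lemma meas_le A B : D A -> D B -> A `<=` B -> (M A <= M B)%E.
Proof.
move=> hA hB sAB; case: HM => _ Mge0 _.
rewrite -(setDUK sAB) meas_add2 //; first (apply: leeDl; apply: Mge0; exact: measD).
- exact: measD.
- by apply/seteqP; split => y // [ha [_ hna]].
Qed.

Lemma meas_big (I : eqType) (s : seq I) F : uniq s -> (forall i, i \in s -> D (F i)) ->
  (forall i j, i \in s -> j \in s -> i != j -> F i `&` F j = set0) ->
  M (UnS s F) = (\sum_(i <- s) M (F i))%E.
Proof.
elim: s => [|a s IH] /= hu h hd.
  by rewrite UnS_nil big_nil; case: HM.
move: hu => /andP [has hu].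
rewrite UnS_cons big_cons meas_add2.
- rewrite IH // => [i hi|i j hi hj hij]; first by apply: h; rewrite inE hi orbT.
  by apply: hd => //; rewrite inE ?hi ?hj orbT.
- by apply: h; rewrite inE eqxx.
- by apply: meas_UnS => i hi; apply: h; rewrite inE hi orbT.
- apply/seteqP; split => y // [hy [i hi hiy]].
  have hne : a != i by apply/eqP => e; rewrite e hi in has.
  have hi' : i \in a :: s by rewrite inE hi orbT.
  have := hd a i (mem_head _ _) hi' hne.
  by move/seteqP => [/(_ y) h1 _]; apply: h1.
Qed.

End Meas.

Ltac natify := repeat match goal with
  | |- context [@fun_of_fin ?T ?F ?ph ?f ?i] =>
      let t := fresh "t" in set t := @fun_of_fin T F ph f i; clearbody t
  end.
Ltac vlia := natify; intros; lia.
Ltac vext := apply/ffunP => ?; rewrite !ffunE; vlia.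

Section Paths.
Variables (k : nat) (L : fin_kgraph k).
Implicit Types (y z : ipath L) (m n p : vec k) (f g l : mor L).

Lemma pf_irr y m n m' n' (h : vle m n) (h' : vle m' n') :
  m = m' -> n = n' -> pf y h = pf y h'.
Proof. by move=> e1 e2; subst m' n'; rewrite (bool_irrelevance h h'). Qed.

Lemma vle_addr m n : vle m (vadd m n).
Proof. by apply/forallP => i; rewrite ffunE; exact: leq_addr. Qed.

Definition seg y m n := pf y (vle_addr m n).

Lemma seg_deg y m n : kd (seg y m n) = n.
Proof. by rewrite /seg pf_deg; vext. Qed.

Lemma segdd y z m m' n : kd (seg y m n) = kd (seg z m' n).
Proof. by rewrite !seg_deg. Qed.

Lemma seg_pf y m n (h : vle m n) : pf y h = seg y m (vsubn n m).
Proof.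
apply: pf_irr => //; apply/ffunP => i; rewrite !ffunE.
move/forallP: (h) => /(_ i); vlia.
Qed.

Lemma seg_comp y m n p : ks (seg y m n) = kr (seg y (vadd m n) p) /\
  kcomp (seg y m n) (seg y (vadd m n) p) = seg y m (vadd n p).
Proof.
have h3 : vle m (vadd (vadd m n) p) by apply/forallP => i; rewrite !ffunE; vlia.
have [e1 e2] := pf_comp y (vle_addr m n) (vle_addr (vadd m n) p) h3.
split => //; rewrite /seg e2; apply: pf_irr => //; vext.
Qed.

Lemma seg_kr y m n n' : kr (seg y m n) = kr (seg y m n').
Proof.
have hm : vle m m by apply/forallP => i.
have e1 := pf_r y (vle_addr m n) hm; have e2 := pf_r y (vle_addr m n') hm.
move: (congr1 kr e1) (congr1 kr e2); rewrite !kr_id /seg => <- <-. done.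
Qed.

Lemma Fac f g f' g' : ks f = kr g -> ks f' = kr g' -> kd f = kd f' -> kd g = kd g' ->
  kcomp f g = kcomp f' g' -> f = f' /\ g = g'.
Proof.
move=> s1 s2 d1 d2 e.
have [[p1 p2] [_ hu]] := kfactor (kd_comp s1).
have u1 := hu (f, g) (And4 s1 erefl erefl erefl).
have u2 := hu (f', g') (And4 s2 (esym d1) (esym d2) (esym e)).
by rewrite u1 in u2; case: u2.
Qed.

Lemma vadd0 m : vadd (vzero k) m = m.
Proof. vext. Qed.

Lemma cyl_seg y l : cyl l y <-> seg y (vzero k) (kd l) = l.
Proof.
rewrite /cyl /=.
have -> : pf y (vle0 (kd l)) = seg y (vzero k) (kd l) by apply: pf_irr => //; vext.
done.
Qed.

Lemma cyl_comp y f g : ks f = kr g -> cyl (kcomp f g) y ->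
  cyl f y /\ seg y (kd f) (kd g) = g.
Proof.
move=> s /cyl_seg; rewrite kd_comp // => e.
have [e1 e2] := seg_comp y (vzero k) (kd f) (kd g).
rewrite vadd0 e in e1 e2.
have [h1 h2] := Fac e1 s (seg_deg _ _ _) (seg_deg _ _ _) e2.
by split => //; apply/cyl_seg.
Qed.

Lemma cyl_ext y f n : cyl f y ->
  ks f = kr (seg y (kd f) n) /\ cyl (kcomp f (seg y (kd f) n)) y.
Proof.
move=> /cyl_seg e.
have [e1 e2] := seg_comp y (vzero k) (kd f) n.
rewrite vadd0 e in e1 e2; split => //.
by apply/cyl_seg; rewrite kd_comp // seg_deg e2.
Qed.

Lemma cyl_comp2 y f g : ks f = kr g -> cyl f y -> seg y (kd f) (kd g) = g ->
  cyl (kcomp f g) y.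
Proof. by move=> s hf e; have [_ h] := cyl_ext (kd g) hf; rewrite e in h. Qed.

Lemma subseg y z a b A C Dd :
  seg y a (vadd A (vadd C Dd)) = seg z b (vadd A (vadd C Dd)) ->
  seg y (vadd a A) C = seg z (vadd b A) C.
Proof.
move=> e.
have [s1 c1] := seg_comp y a A (vadd C Dd).
have [s2 c2] := seg_comp z b A (vadd C Dd).
rewrite e -c2 in c1.
have [_ e'] := Fac s1 s2 (segdd _ _ _ _ _) (segdd _ _ _ _ _) c1.
have [s3 c3] := seg_comp y (vadd a A) C Dd.
have [s4 c4] := seg_comp z (vadd b A) C Dd.
rewrite e' -c4 in c3.
by have [] := Fac s3 s4 (segdd _ _ _ _ _) (segdd _ _ _ _ _) c3.
Qed.

Lemma cyl_kr y f n : cyl f y -> kr (seg y (vzero k) n) = kr f.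
Proof. by move=> /cyl_seg e; rewrite (seg_kr _ _ _ (kd f)) e. Qed.

End Paths.

Section Main.
Variables (R : realType) (k : nat) (L : fin_kgraph k) (x : vert L -> R)
  (M : set (ipath L) -> \bar R).
Hypotheses (HSC : strongly_connected L) (Hx : is_xLambda x) (HM : is_borel_prob M)
  (HMc : forall l : mor L, M (cyl l) = ((rho_pow R L (kd l))^-1 * x (ks l))%:E).

Local Notation D := <<s cylinders L >>.

Lemma HMm : is_measure_on D M. Proof. by case: HM. Qed.

Definition rinv n := (rho_pow R L n)^-1.
Definition cc l := rinv (kd l) * x (ks l).

Lemma HMc' l : M (cyl l) = (cc l)%:E. Proof. exact: HMc. Qed.

Lemma cyl_meas l : D (cyl l). Proof. by apply: sub_sigma_algebra; exists l. Qed.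

Lemma Sv_fin v n : finite_set [set l : mor L | kd l = n /\ kr l = v].
Proof. by apply: (sub_finite_set _ (@kfinite _ L n)) => l []. Qed.

Definition Sv v n : seq (mor L) := enum_fset (fset_set [set l : mor L | kd l = n /\ kr l = v]).

Lemma memSv v n l : l \in Sv v n <-> kd l = n /\ kr l = v.
Proof.
rewrite /Sv.
have -> : (l \in enum_fset (fset_set [set l : mor L | kd l = n /\ kr l = v])) =
   (l \in fset_set [set l : mor L | kd l = n /\ kr l = v]) by [].
by rewrite (in_fset_set (Sv_fin v n)) in_setE.
Qed.

Lemma Sv_uniq v n : uniq (Sv v n). Proof. exact: fset_uniq. Qed.

Lemma partition mu n : cyl mu = UnS (Sv (ks mu) n) (fun l => cyl (kcomp mu l)).
Proof.
apply/seteqP; split => y.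
- move=> hy; have [e1 e2] := cyl_ext n hy.
  by exists (seg y (kd mu) n) => //; apply/memSv; rewrite seg_deg -e1.
- by move=> [l /memSv [_ hr] hy]; exact: (cyl_comp (esym hr) hy).1.
Qed.

Lemma partition_disj mu n l l' : l \in Sv (ks mu) n -> l' \in Sv (ks mu) n -> l != l' ->
  cyl (kcomp mu l) `&` cyl (kcomp mu l') = set0.
Proof.
move=> /memSv [d1 r1] /memSv [d2 r2] hne; apply/seteqP; split => y // [h1 h2].
have e1 := (cyl_comp (esym r1) h1).2; have e2 := (cyl_comp (esym r2) h2).2.
rewrite d1 in e1; rewrite d2 in e2.
by move/eqP: hne; apply; rewrite -e1 -e2.
Qed.

Lemma cc_sum mu n : cc mu = \sum_(l <- Sv (ks mu) n) cc (kcomp mu l).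
Proof.
apply: EFin_inj; rewrite -HMc' (partition mu n) (meas_big HMm (Sv_uniq _ _)).
- by rewrite -sumEFin; apply: eq_big_seq => l hl; rewrite HMc'.
- by move=> l _; exact: cyl_meas.
- exact: partition_disj.
Qed.

Lemma rinvD m n : rinv (vadd m n) = rinv m * rinv n.
Proof.
rewrite /rinv /rho_pow -invfM -big_split /=; congr (_^-1).
by apply: eq_bigr => i _; rewrite ffunE exprD.
Qed.

Lemma rinv0 : rinv (vzero k) = 1.
Proof. by rewrite /rinv /rho_pow big1 ?invr1 // => i _; rewrite ffunE expr0. Qed.

Lemma rinv_e i : rinv (ve i) = (rhoL R L i)^-1.
Proof.
rewrite /rinv /rho_pow (bigD1 i) //= big1 ?mulr1 => [|j hj]; first by rewrite ffunE eqxx expr1.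
by rewrite ffunE (negbTE hj) expr0.
Qed.

Lemma cc_comp mu l : ks mu = kr l -> cc (kcomp mu l) = rinv (kd mu) * cc l.
Proof. by move=> h; rewrite /cc kd_comp // ks_comp // rinvD mulrA. Qed.

Lemma cc_id v : cc (kid v) = x v.
Proof. by rewrite /cc kd_id ks_id rinv0 mul1r. Qed.

Lemma x_ge0 v : 0 <= x v. Proof. by case: Hx. Qed.

Lemma x_le1 v : x v <= 1.
Proof.
case: Hx => _ hs _; rewrite -hs (bigD1 v) //= lerDl.
by apply: sumr_ge0 => w _; exact: x_ge0.
Qed.

Lemma exists_pos : exists v0, 0 < x v0.
Proof.
apply: contrapT => hn.
have h0 : forall v, x v = 0.
  move=> v; apply/eqP; rewrite eq_le x_ge0 andbT leNgt; apply/negP => hp.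
  by apply: hn; exists v.
case: Hx => _ hs _; move: hs; rewrite big1 // => /eqP; by rewrite eq_sym oner_eq0.
Qed.

Lemma rho_pos i : 0 < (rhoL R L i)^-1.
Proof.
have [v0 hv0] := exists_pos.
have e : x v0 = (rhoL R L i)^-1 * \sum_(l <- Sv v0 (ve i)) x (ks l).
  rewrite -cc_id (cc_sum _ (ve i)) ks_id mulr_sumr; apply: eq_big_seq => l /memSv [hd hr].
  by rewrite cc_comp ?ks_id ?hr // kd_id rinv0 mul1r /cc hd rinv_e.
have S0 : 0 <= \sum_(l <- Sv v0 (ve i)) x (ks l) by apply: sumr_ge0 => l _; exact: x_ge0.
move: hv0; rewrite e => hv0; nra.
Qed.

Lemma rinv_pos n : 0 < rinv n.
Proof.
rewrite /rinv invr_gt0 /rho_pow; apply: prodr_gt0 => i _; apply: exprn_gt0.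
by rewrite -invr_gt0; exact: rho_pos.
Qed.

Lemma x_pos w : 0 < x w.
Proof.
have [v0 hv0] := exists_pos.
have [l [hr hs]] := HSC w v0.
have sub : cyl l `<=` cyl (kid w).
  move=> y hy; rewrite -(kid_l l) in hy.
  by have [h _] := cyl_comp (ks_id _) hy; rewrite hr in h.
have := meas_le HMm (cyl_meas l) (cyl_meas (kid w)) sub.
rewrite !HMc' lee_fin cc_id; apply: lt_le_trans.
by rewrite /cc hs; apply: mulr_gt0 => //; exact: rinv_pos.
Qed.

Lemma cc_pos l : 0 < cc l.
Proof. by apply: mulr_gt0; [exact: rinv_pos|exact: x_pos]. Qed.

Lemma cyl_nonempty (l : mor L) : exists y, cyl l y.
Proof.
apply: contrapT => hn.
have e : cyl l = set0 by apply/seteqP; split => y // hy; apply: hn; exists y.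
have := HMc' l; rewrite e; case: HMm => M0 _ _; rewrite M0 => h0; have e0 : (0:R) = cc l by apply: EFin_inj.
by have := cc_pos l; rewrite -e0 ltxx.
Qed.

Section U.
Variables (a : vec k) (bt : vert L -> mor L) (K : R).
Hypotheses (Hbt : forall w, kd (bt w) = a /\ kr (bt w) = w) (HK0 : 0 <= K)
  (HKb : forall w, (1 - K) * x w <= rinv a * x (ks (bt w))).

Fixpoint U (j : nat) (mu : mor L) : set (ipath L) :=
  match j with
  | 0%N => cyl mu
  | j'.+1 => UnS [seq l <- Sv (ks mu) a | l != bt (ks mu)] (fun l => U j' (kcomp mu l))
  end.

Lemma U_meas j mu : D (U j mu) /\ U j mu `<=` cyl mu.
Proof.
elim: j mu => [|j IH] mu /=; first by split => //; exact: cyl_meas.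
split.
- by apply: meas_UnS => l _; exact: (IH _).1.
- move=> y [l]; rewrite mem_filter => /andP [_ /memSv [_ hr]] hy.
  have := (IH _).2 _ hy; move/(cyl_comp (esym hr)) => [] //.
Qed.

Lemma U_bound j mu : (M (U j mu) <= (K ^+ j * cc mu)%:E)%E.
Proof.
elim: j mu => [|j IH] mu /=; first by rewrite HMc' expr0 mul1r.
rewrite (meas_big HMm).
- apply: (le_trans (@lee_sum R _ _ (fun l => (K ^+ j * cc (kcomp mu l))%:E) _ xpredT (fun l _ => IH (kcomp mu l)))).
  rewrite sumEFin lee_fin -mulr_sumr exprSr -mulrA; apply: ler_wpM2l; first exact: exprn_ge0.
  rewrite big_filter.
  have hb : bt (ks mu) \in Sv (ks mu) a by apply/memSv; exact: Hbt.
  have e := cc_sum mu a; rewrite (bigD1_seq _ hb (Sv_uniq _ _)) /= in e.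
  have : (1 - K) * cc mu <= cc (kcomp mu (bt (ks mu))).
    rewrite cc_comp; last by rewrite (Hbt _).2.
    rewrite /cc (Hbt _).1 mulrCA mulrA [rinv a * _]mulrC -mulrA.
    by apply: ler_wpM2l; [apply: ltW; exact: rinv_pos|rewrite mulrC; exact: HKb].
  lra.
- by apply: filter_uniq; exact: Sv_uniq.
- by move=> l _; exact: (U_meas _ _).1.
- move=> l l'; rewrite !mem_filter => /andP [_ hl] /andP [_ hl'] hne.
  have := partition_disj hl hl' hne; move/seteqP => [h1 _].
  apply/seteqP; split => y // [hy hy'].
  by apply: h1; split; [exact: (U_meas _ _).2 _ hy|exact: (U_meas _ _).2 _ hy'].
Qed.

Lemma U_mem j mu y : cyl mu y ->
  (forall i, (i < j)%N -> seg y (vadd (kd mu) (vscale i a)) a !=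
                          bt (kr (seg y (vadd (kd mu) (vscale i a)) a))) -> U j mu y.
Proof.
elim: j mu => [|j IH] mu hy hb //=.
have [e1 e2] := cyl_ext a hy.
exists (seg y (kd mu) a).
- rewrite mem_filter; apply/andP; split; last by apply/memSv; rewrite seg_deg -e1.
  have e0 : vadd (kd mu) (vscale 0 a) = kd mu by vext.
  by have := hb 0%N isT; rewrite e0 -e1.
- apply: IH => // i hi.
  have e0 : vadd (kd (kcomp mu (seg y (kd mu) a))) (vscale i a) = vadd (kd mu) (vscale i.+1 a).
    by rewrite kd_comp // seg_deg; apply/ffunP => t; rewrite !ffunE mulSn; vlia.
  by rewrite e0; apply: hb.
Qed.

End U.


Lemma bad_sub (a : vec k) (bt : vert L -> mor L) (o : vert L -> vec k) (y0 : ipath L)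
  (gp gm P Qd : vec k)
  (hne : seg y0 (vadd gp P) Qd <> seg y0 (vadd gm P) Qd)
  (Hoa : forall w t, (o w t + (gp t + gm t + (P t + Qd t)) <= a t)%N)
  (Hbtau : forall w y s, seg y s a = bt w ->
     seg y (vadd s (o w)) (vadd (vadd gp gm) (vadd P Qd)) =
     seg y0 (vzero k) (vadd (vadd gp gm) (vadd P Qd)))
  (mu nu : mor L) (hs : ks mu = ks nu)
  (hg : forall t, (kd mu t + gm t = kd nu t + gp t)%N) (j : nat) :
  bad_union mu nu j a `<=` U a bt j mu.
Proof.
move=> y [l [hrl hdl hmin hcyl]].
have [hmu hyl] := cyl_comp (esym hrl) hcyl.
apply: U_mem => // i hi; apply/negP => /eqP hb.
have ht := Hbtau _ _ _ hb.
case: hmin => al [be [h1 h2 h3 _]].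
have [z hz] := cyl_nonempty (kcomp (kcomp mu l) al).
have hz1 : seg z (kd mu) (kd l) = l.
  have [hz' _] := cyl_comp h1 hz; exact: (cyl_comp (esym hrl) hz').2.
have hz2 : seg z (kd nu) (kd l) = l.
  rewrite h3 in hz; have [hz' _] := cyl_comp h2 hz.
  have hrl' : ks nu = kr l by rewrite -hs.
  exact: (cyl_comp hrl' hz').2.
set w := kr _ in hb ht.
set X := vadd (vadd (vscale i a) (o w)) (vadd gp P).
set X' := vadd (vadd (vscale i a) (o w)) (vadd gm P).
have hcomp : forall t, (i * a t + (o w t + (gp t + gm t + (P t + Qd t))) <= j * a t)%N.
  move=> t; move: (Hoa w t) (leq_mul hi (leqnn (a t))); rewrite mulSn; vlia.
have eL : kd l = vadd X (vadd Qd (vsubn (kd l) (vadd X Qd))).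
  rewrite hdl; apply/ffunP => t; rewrite !ffunE; move: (hcomp t); vlia.
have eL' : kd l = vadd X' (vadd Qd (vsubn (kd l) (vadd X' Qd))).
  rewrite hdl; apply/ffunP => t; rewrite !ffunE; move: (hcomp t); vlia.
have E1 : seg y (vadd (kd mu) X) Qd = seg z (vadd (kd mu) X) Qd.
  by apply: (subseg (Dd := vsubn (kd l) (vadd X Qd))); rewrite -eL hyl hz1.
have E1' : seg y (vadd (kd mu) X') Qd = seg z (vadd (kd mu) X') Qd.
  by apply: (subseg (Dd := vsubn (kd l) (vadd X' Qd))); rewrite -eL' hyl hz1.
have E2 : seg z (vadd (kd mu) X) Qd = seg z (vadd (kd nu) X) Qd.
  by apply: (subseg (Dd := vsubn (kd l) (vadd X Qd))); rewrite -eL hz1 hz2.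
have eT : vadd (vadd gp gm) (vadd P Qd) = vadd (vadd gp P) (vadd Qd gm) by vext.
have eT' : vadd (vadd gp gm) (vadd P Qd) = vadd (vadd gm P) (vadd Qd gp) by vext.
set s := vadd (vadd (kd mu) (vscale i a)) (o w) in ht.
have A1 : seg y (vadd s (vadd gp P)) Qd = seg y0 (vadd (vzero k) (vadd gp P)) Qd.
  by apply: (subseg (Dd := gm)); rewrite -eT.
have A2 : seg y (vadd s (vadd gm P)) Qd = seg y0 (vadd (vzero k) (vadd gm P)) Qd.
  by apply: (subseg (Dd := gp)); rewrite -eT'.
have v1 : vadd s (vadd gp P) = vadd (kd mu) X by vext.
have v2 : vadd s (vadd gm P) = vadd (kd mu) X' by vext.
have v3 : vadd (kd mu) X' = vadd (kd nu) X.
  by apply/ffunP => t; rewrite !ffunE; move: (hg t); vlia.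
apply: hne; rewrite vadd0 in A1; rewrite vadd0 in A2.
by rewrite -A1 -A2 v1 v2 E1 E1' v3 E2.
Qed.


Lemma main_sec (g : zvec k) : ~ Per L g ->
  exists a : vec k, a != vzero k /\
    exists K : R, 0 < K < 1 /\
      forall mu nu : mor L, ks mu = ks nu -> vsubz (kd mu) (kd nu) = g ->
        forall j : nat,
          (M (bad_union mu nu j a) <= (K ^+ j)%:E * M (cyl mu))%E.
Proof.
move=> hPer.
have [gp [gm [hg hgt]]] : exists gp gm : vec k, g = vsubz gp gm /\
    (forall mu nu : mor L, vsubz (kd mu) (kd nu) = g ->
       forall t, (kd mu t + gm t = kd nu t + gp t)%N).
  pose pp (z : int) := match z with Posz n => n | Negz _ => 0%N end.
  pose nn (z : int) := match z with Posz _ => 0%N | Negz n => n.+1 end.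
  have hpn : forall z : int, z = (pp z)%:Z - (nn z)%:Z.
    by case => n /=; [rewrite subr0|rewrite NegzE sub0r].
  exists [ffun t => pp (g t)], [ffun t => nn (g t)]; split.
    by apply/ffunP => t; rewrite !ffunE; exact: hpn.
  move=> mu nu e t; have := congr1 (fun f : zvec k => f t) e; rewrite /= !ffunE.
  have := hpn (g t); vlia.
have [y0 [P [Q [h1 [h2 hne0]]]]] : exists (y0 : ipath L) (P Q : vec k)
    (h1 : vle (vadd gp P) (vadd gp Q)) (h2 : vle (vadd gm P) (vadd gm Q)),
    pf y0 h1 <> pf y0 h2.
  apply: contrapT => hn; apply: hPer; exists gp, gm; split => // y P Q h1 h2.
  by apply: contrapT => hne; apply: hn; exists y, P, Q, h1, h2.
have hPQ : forall t, (P t <= Q t)%N.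
  by move=> t; move/forallP: (h1) => /(_ t); rewrite !ffunE; vlia.
have [Qd hne] : exists Qd, seg y0 (vadd gp P) Qd <> seg y0 (vadd gm P) Qd.
  exists (vsubn Q P) => e; apply: hne0; rewrite !seg_pf.
  have -> : vsubn (vadd gp Q) (vadd gp P) = vsubn Q P.
    by apply/ffunP => t; rewrite !ffunE; move: (hPQ t); vlia.
  have -> : vsubn (vadd gm Q) (vadd gm P) = vsubn Q P.
    by apply/ffunP => t; rewrite !ffunE; move: (hPQ t); vlia.
  exact: e.
have [t0 _] : exists t : 'I_k, True.
  apply: contrapT => hn; apply: hne.
  have -> : gp = gm by apply/ffunP => t; exfalso; apply: hn; exists t.
  done.
set T := vadd (vadd gp gm) (vadd P Qd).
set tau := seg y0 (vzero k) T.
have [cw hcw] : exists cw : vert L -> mor L, forall w, kr (cw w) = w /\ ks (cw w) = kr tau.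
  have [f hf] := choice (fun w => HSC w (kr tau)); by exists f.
have [zw hzw] : exists zw : vert L -> ipath L, forall w, cyl (kcomp (cw w) tau) (zw w).
  have [f hf] := choice (fun w => cyl_nonempty (kcomp (cw w) tau)); by exists f.
have [a [ha Hoa]] : exists a : vec k, a != vzero k /\
    forall w t, (kd (cw w) t + (gp t + gm t + (P t + Qd t)) <= a t)%N.
  exists [ffun t => ((\sum_w kd (cw w) t) + (gp t + gm t + (P t + Qd t)) + 1)%N]; split.
    apply/eqP => e; have := congr1 (fun f : vec k => f t0) e; rewrite /= !ffunE; vlia.
  move=> w t; rewrite ffunE.
  have : (kd (cw w) t <= \sum_w' kd (cw w') t)%N by rewrite (bigD1 w) //= leq_addr.
  vlia.
pose bt w := seg (zw w) (vzero k) a.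
have Hbt : forall w, kd (bt w) = a /\ kr (bt w) = w.
  move=> w; split; first exact: seg_deg.
  by rewrite /bt (cyl_kr a (cyl_comp (hcw w).2 (hzw w)).1); exact: (hcw w).1.
have Hbtau : forall w y s, seg y s a = bt w ->
    seg y (vadd s (kd (cw w))) T = seg y0 (vzero k) T.
  move=> w y s e.
  have ea : a = vadd (kd (cw w)) (vadd T (vsubn a (vadd (kd (cw w)) T))).
    by apply/ffunP => t; rewrite /T !ffunE; move: (Hoa w t); vlia.
  have e' : seg y s (vadd (kd (cw w)) (vadd T (vsubn a (vadd (kd (cw w)) T)))) =
            seg (zw w) (vzero k) (vadd (kd (cw w)) (vadd T (vsubn a (vadd (kd (cw w)) T)))).
    by rewrite -ea.
  rewrite (subseg e') vadd0.
  have := (cyl_comp (hcw w).2 (hzw w)).2; rewrite seg_deg => ->.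
  done.
have [v0 hv0] := exists_pos.
pose eps := (\sum_w (cc (bt w))^-1)^-1.
have Spos : 0 < \sum_w (cc (bt w))^-1.
  rewrite (bigD1 v0) //=.
  have t1 : 0 < (cc (bt v0))^-1 by rewrite invr_gt0; exact: cc_pos.
  have t2 : 0 <= \sum_(w | w != v0) (cc (bt w))^-1.
    by apply: sumr_ge0 => w _; rewrite invr_ge0; apply: ltW; exact: cc_pos.
  lra.
have eps_pos : 0 < eps by rewrite /eps invr_gt0.
have eps_le : forall w, eps <= cc (bt w).
  move=> w; rewrite /eps -[cc (bt w)]invrK lef_pV2 ?posrE ?invr_gt0 ?cc_pos //.
  rewrite (bigD1 w) //= lerDl.
  by apply: sumr_ge0 => w' _; rewrite invr_ge0; apply: ltW; exact: cc_pos.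
clearbody eps.
pose K := (1 + eps)^-1.
have hK1 : K * (1 + eps) = 1 by rewrite /K mulVf //; apply: lt0r_neq0; lra.
have K_pos : 0 < K by rewrite /K invr_gt0; lra.
clearbody K.
have HKb : forall w, (1 - K) * x w <= rinv a * x (ks (bt w)).
  move=> w; have := eps_le w; rewrite /cc (Hbt w).1.
  have := x_le1 w; have := x_ge0 w; nra.
exists a; split => //; exists K; split; first by apply/andP; split => //; nra.
move=> mu nu hs hd j.
have sub : bad_union mu nu j a `<=` U a bt j mu := @bad_sub _ _ _ _ _ _ _ _ hne Hoa Hbtau _ _ hs (hgt _ _ hd) j.
have Dbad : D (bad_union mu nu j a).
  have -> : bad_union mu nu j a = UnS (Sv (ks mu) (vscale j a))
      (fun l => [set y | lmin_nonempty (kcomp mu l) (kcomp nu l) /\ cyl (kcomp mu l) y]).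
    apply/seteqP; split => y.
    - by move=> [l [hr hdl hm hc]]; exists l; [apply/memSv; split|split].
    - by move=> [l /memSv [hdl hr] [hm hc]]; exists l; split.
  apply: meas_UnS => l _.
  case: (classic (lmin_nonempty (kcomp mu l) (kcomp nu l))) => h.
  - have -> : [set y | lmin_nonempty (kcomp mu l) (kcomp nu l) /\ cyl (kcomp mu l) y] =
        cyl (kcomp mu l) by apply/seteqP; split => y; [move=> [] //|by split].
    exact: cyl_meas.
  - have -> : [set y | lmin_nonempty (kcomp mu l) (kcomp nu l) /\ cyl (kcomp mu l) y] = set0
      by apply/seteqP; split => y // [].
    exact: sigma_algebra0.
apply: (le_trans (meas_le HMm Dbad (U_meas a bt j mu).1 sub)).
rewrite HMc' -EFinM; apply: U_bound => //; exact: ltW.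
Qed.

End Main.

Theorem lemma8p4 (R : realType) (k : nat) (L : fin_kgraph k)
  (x : vert L -> R) (M : set (ipath L) -> \bar R) (g : zvec k) :
  strongly_connected L ->
  is_xLambda x ->
  is_borel_prob M ->
  (forall l : mor L, M (cyl l) = ((rho_pow R L (kd l))^-1 * x (ks l))%:E) ->
  ~ Per L g ->
  exists a : vec k, a != vzero k /\
    exists K : R, 0 < K < 1 /\
      forall mu nu : mor L, ks mu = ks nu -> vsubz (kd mu) (kd nu) = g ->
        forall j : nat,
          (M (bad_union mu nu j a) <= (K ^+ j)%:E * M (cyl mu))%E.
Proof. by move=> HSC Hx HM HMc hP; exact: (main_sec HSC Hx HM HMc hP). Qed.
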